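(* Let $T$ and $A$ be closed Hermitian subspaces in $X^2$ and $S$ a self-adjoint subspace in $X^2$, with $D(T)=D(S)=:D\subset D(A)$ and $T=S+A$, and assume $\rho(T)\cap\rho(S)\neq\emptyset$. Let $Q:A(0)^\perp\to S(0)^\perp$ be the orthogonal projection. Then $QA_s$ restricted to $D$ is a finite rank operator if and only if $T$ is a finite rank perturbation of $S$.
   Context: $X$ is a complex Hilbert space and $X^2=X\times X$ carries the inner product $\langle (x,f),(y,g)\rangle=\langle x,y\rangle+\langle f,g\rangle$. A subspace $T$ in $X^2$ means a linear subspace of $X^2$ (a linear relation); a linear operator in $X$ is identified with its graph. Notation: $D(T)=\{x:(x,f)\in T \text{ for some } f\}$, $T(x)=\{f:(x,f)\in T\}$, $T^{-1}=\{(f,x):(x,f)\in T\}$, $\lambda I$ is the graph of $x\mapsto \lambda x$. The adjoint is $T^*=\{(y,g)\in X^2:\langle g,x\rangle=\langle y,f\rangle \text{ for all }(x,f)\in T\}$; $T$ is Hermitian if $T\subset T^*$ and self-adjoint if $T=T^*$. For subspaces $S,A$ in $X^2$, $S+A=\{(x,f+g):(x,f)\in S,(x,g)\in A\}$. For a closed subspace $T$, set $T_\infty=\{(0,g)\in X^2:(0,g)\in T\}$ and $T_s=T\ominus T_\infty$ (orthogonal complement of $T_\infty$ in $T$), so $T=T_s\oplus T_\infty$; $T_s$ is the graph of a linear operator (the operator part of $T$) with $D(T_s)=D(T)$ and $R(T_s)\subset T(0)^\perp$. Resolvent set: $\rho(T)=\{\lambda\in\mathbb C:(\lambda I-T)^{-1}$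 is a bounded linear operator defined on all of $X\}$. Finite rank perturbation: for closed subspaces $T,S$ in $X^2$ with orthogonal projections $P_T,P_S$ of $X^2$ onto $T$, $S$, $T$ is a finite rank perturbation of $S$ if $P_T-P_S$ has finite-dimensional range. *)

(* Defs.v *)
From Stdlib Require Import Reals List.
Open Scope R_scope.
Set Implicit Arguments.

Record C : Type := mkC { Re : R ; Im : R }.
Definition C0 : C := mkC 0 0.
Definition C1 : C := mkC 1 0.
Definition Cadd (a b : C) : C := mkC (Re a + Re b) (Im a + Im b).
Definition Cmul (a b : C) : C :=
  mkC (Re a * Re b - Im a * Im b) (Re a * Im b + Im a * Re b).
Definition Cconj (a : C) : C := mkC (Re a) (- Im a).

Record Hilbert : Type := {
  hcar :> Type;
  hzero : hcar;
  hadd : hcar -> hcar -> hcar;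
  hopp : hcar -> hcar;
  hscal : C -> hcar -> hcar;
  hinner : hcar -> hcar -> C;
  hadd_assoc : forall x y z, hadd x (hadd y z) = hadd (hadd x y) z;
  hadd_comm : forall x y, hadd x y = hadd y x;
  hadd_0 : forall x, hadd x hzero = x;
  hadd_opp : forall x, hadd x (hopp x) = hzero;
  hscal_1 : forall x, hscal C1 x = x;
  hscal_mul : forall a b x, hscal (Cmul a b) x = hscal a (hscal b x);
  hscal_addv : forall a x y, hscal a (hadd x y) = hadd (hscal a x) (hscal a y);
  hscal_adds : forall a b x, hscal (Cadd a b) x = hadd (hscal a x) (hscal b x);
  hinner_add : forall x y z, hinner (hadd x y) z = Cadd (hinner x z) (hinner y z);
  hinner_scal : forall a x y, hinner (hscal a x) y = Cmul a (hinner x y);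
  hinner_conj : forall x y, hinner y x = Cconj (hinner x y);
  hinner_im : forall x, Im (hinner x x) = 0;
  hinner_pos : forall x, 0 <= Re (hinner x x);
  hinner_def : forall x, hinner x x = C0 -> x = hzero;
  hcomplete : forall u : nat -> hcar,
    (forall eps, 0 < eps -> exists N, forall m n, (N <= m)%nat -> (N <= n)%nat ->
        sqrt (Re (hinner (hadd (u m) (hopp (u n))) (hadd (u m) (hopp (u n))))) < eps) ->
    exists l, forall eps, 0 < eps -> exists N, forall n, (N <= n)%nat ->
        sqrt (Re (hinner (hadd (u n) (hopp l)) (hadd (u n) (hopp l)))) < eps
}.

Section LinRel.
Variable X : Hilbert.

Definition hsub (x y : X) : X := hadd X x (hopp X y).
Definition hnorm (x : X) : R := sqrt (Re (hinner X x x)).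

Definition X2 := (hcar X * hcar X)%type.
Definition zero2 : X2 := (hzero X, hzero X).
Definition add2 (u v : X2) : X2 := (hadd X (fst u) (fst v), hadd X (snd u) (snd v)).
Definition sub2 (u v : X2) : X2 := (hsub (fst u) (fst v), hsub (snd u) (snd v)).
Definition scal2 (c : C) (u : X2) : X2 := (hscal X c (fst u), hscal X c (snd u)).
Definition inner2 (u v : X2) : C := Cadd (hinner X (fst u) (fst v)) (hinner X (snd u) (snd v)).
Definition norm2 (u : X2) : R := sqrt (Re (inner2 u u)).

Definition subspace2 (T : X2 -> Prop) : Prop :=
  T zero2 /\ (forall u v, T u -> T v -> T (add2 u v)) /\
  (forall c u, T u -> T (scal2 c u)).

Definition conv2 (u : nat -> X2) (l : X2) : Prop :=
  forall eps, 0 < eps -> exists N, forall n, (N <= n)%nat -> norm2 (sub2 (u n) l) < eps.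

Definition closed_subspace2 (T : X2 -> Prop) : Prop :=
  subspace2 T /\
  (forall (u : nat -> X2) (l : X2), (forall n, T (u n)) -> conv2 u l -> T l).

Definition dom (T : X2 -> Prop) (x : X) : Prop := exists f, T (x, f).
Definition image_at (T : X2 -> Prop) (x : X) (f : X) : Prop := T (x, f).

Definition adjoint (T : X2 -> Prop) (w : X2) : Prop :=
  forall x f, T (x, f) -> hinner X (snd w) x = hinner X (fst w) f.
Definition hermitian (T : X2 -> Prop) : Prop := forall w, T w -> adjoint T w.
Definition selfadjoint (T : X2 -> Prop) : Prop := forall w, T w <-> adjoint T w.

Definition rel_sum (S A : X2 -> Prop) (w : X2) : Prop :=
  exists f g, S (fst w, f) /\ A (fst w, g) /\ snd w = hadd X f g.

Definition rel_inf (T : X2 -> Prop) (w : X2) : Prop := fst w = hzero X /\ T w.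
Definition rel_s (T : X2 -> Prop) (w : X2) : Prop :=
  T w /\ forall v, rel_inf T v -> inner2 w v = C0.

(* resolvent set: (lambda I - T)^{-1} is a bounded linear operator on all of X.
   (lambda I - T)^{-1} = {(lambda x - f, x) : (x,f) in T}. *)
Definition resolvent_rel (T : X2 -> Prop) (lam : C) (w : X2) : Prop :=
  exists f, T (snd w, f) /\ fst w = hsub (hscal X lam (snd w)) f.
Definition in_resolvent (T : X2 -> Prop) (lam : C) : Prop :=
  (forall y, exists x, resolvent_rel T lam (y, x)) /\
  (forall y x1 x2, resolvent_rel T lam (y, x1) -> resolvent_rel T lam (y, x2) -> x1 = x2) /\
  (exists M, forall y x, resolvent_rel T lam (y, x) -> hnorm x <= M * hnorm y).

Definition perp (M : X -> Prop) (x : X) : Prop := forall m, M m -> hinner X x m = C0.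
Definition is_proj (M : X -> Prop) (y z : X) : Prop :=
  M z /\ forall m, M m -> hinner X (hsub y z) m = C0.
Definition is_proj2 (T : X2 -> Prop) (w q : X2) : Prop :=
  T q /\ forall v, T v -> inner2 (sub2 w q) v = C0.

Fixpoint lincomb (cs : list C) (vs : list X) : X :=
  match cs, vs with
  | c :: cs', v :: vs' => hadd X (hscal X c v) (lincomb cs' vs')
  | _, _ => hzero X
  end.
Fixpoint lincomb2 (cs : list C) (vs : list X2) : X2 :=
  match cs, vs with
  | c :: cs', v :: vs' => add2 (scal2 c v) (lincomb2 cs' vs')
  | _, _ => zero2
  end.
Definition finite_dim (P : X -> Prop) : Prop :=
  exists vs : list X, forall z, P z -> exists cs : list C, z = lincomb cs vs.
Definition finite_dim2 (P : X2 -> Prop) : Prop :=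
  exists vs : list X2, forall z, P z -> exists cs : list C, z = lincomb2 cs vs.

Definition finite_rank_perturbation (T S : X2 -> Prop) : Prop :=
  finite_dim2 (fun z => exists w p q, is_proj2 T w p /\ is_proj2 S w q /\ z = sub2 p q).

Definition QAs_range (A S : X2 -> Prop) (D : X -> Prop) (z : X) : Prop :=
  exists x f, D x /\ rel_s A (x, f) /\ perp (image_at A (hzero X)) f /\
              is_proj (perp (image_at S (hzero X))) f z.

End LinRel.

(* Main.v *)
From Stdlib Require Import Reals List Lra Psatz Classical ClassicalEpsilon.
Require Import Defs.
Open Scope R_scope.

Lemma Ceq : forall a b : C, Re a = Re b -> Im a = Im b -> a = b.
Proof. intros [a1 a2] [b1 b2]; simpl; intros; subst; reflexivity. Qed.

Definition Copp (a : C) : C := mkC (- Re a) (- Im a).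
Definition Cm1 : C := mkC (-1) 0.

Ltac Csolve := apply Ceq; unfold Cmul, Cadd, Cconj, Copp, C0, C1, Cm1 in *; simpl;
  first [ring | field | lra | nra].

Section Basic.
Variable H : Hilbert.

Lemma hadd_0l : forall x : H, hadd H (hzero H) x = x.
Proof. intros; rewrite hadd_comm; apply hadd_0. Qed.

Lemma hadd_cancel0 : forall y : H, y = hadd H y y -> y = hzero H.
Proof.
  intros y E. transitivity (hadd H (hadd H y y) (hopp H y)).
  rewrite <- hadd_assoc, hadd_opp, hadd_0. reflexivity.
  rewrite <- E. apply hadd_opp.
Qed.

Lemma hscal_C0 : forall x : H, hscal H C0 x = hzero H.
Proof.
  intros x; apply hadd_cancel0. rewrite <- hscal_adds. f_equal. Csolve.
Qed.

Lemma hscal_zero : forall a, hscal H a (hzero H) = hzero H.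
Proof.
  intros a; apply hadd_cancel0. rewrite <- hscal_addv, hadd_0. reflexivity.
Qed.

Lemma inv_unique : forall x a b : H, hadd H a x = hzero H -> hadd H x b = hzero H -> a = b.
Proof.
  intros x a b H1 H2.
  rewrite <- (hadd_0 H a), <- H2, hadd_assoc, H1, hadd_0l. reflexivity.
Qed.

Lemma hopp_scal : forall x : H, hopp H x = hscal H Cm1 x.
Proof.
  intros x. symmetry. apply (inv_unique x).
  - pattern x at 2; rewrite <- (hscal_1 H x). rewrite <- hscal_adds.
    replace (Cadd Cm1 C1) with C0 by Csolve. apply hscal_C0.
  - apply hadd_opp.
Qed.

Inductive vexp := VA (n : nat) | V0 | VAdd (a b : vexp) | VOpp (a : vexp) | VScal (c : C) (a : vexp).

Fixpoint veval (env : list H) (e : vexp) : H :=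
  match e with
  | VA n => nth n env (hzero H)
  | V0 => hzero H
  | VAdd a b => hadd H (veval env a) (veval env b)
  | VOpp a => hopp H (veval env a)
  | VScal c a => hscal H c (veval env a)
  end.

Fixpoint vcoef (e : vexp) (i : nat) : C :=
  match e with
  | VA n => if Nat.eqb n i then C1 else C0
  | V0 => C0
  | VAdd a b => Cadd (vcoef a i) (vcoef b i)
  | VOpp a => Cmul Cm1 (vcoef a i)
  | VScal c a => Cmul c (vcoef a i)
  end.

Fixpoint lcf (env : list H) (f : nat -> C) (k : nat) : H :=
  match k with
  | O => hzero H
  | S k' => hadd H (lcf env f k') (hscal H (f k') (nth k' env (hzero H)))
  end.

Lemma add4 : forall a b c d : H, hadd H (hadd H a b) (hadd H c d) = hadd H (hadd H a c) (hadd H b d).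
Proof.
  intros. rewrite <- !hadd_assoc. f_equal. rewrite !hadd_assoc. f_equal. apply hadd_comm.
Qed.

Lemma lcf_ext : forall env f g k, (forall i, (i < k)%nat -> f i = g i) -> lcf env f k = lcf env g k.
Proof.
  intros env f g k; induction k; intros E; simpl; auto.
  rewrite IHk by (intros; apply E; lia). rewrite E by lia. reflexivity.
Qed.

Lemma lcf_add : forall env f g k, lcf env (fun i => Cadd (f i) (g i)) k = hadd H (lcf env f k) (lcf env g k).
Proof.
  intros env f g k; induction k; simpl. rewrite hadd_0; reflexivity.
  rewrite IHk, hscal_adds, add4. reflexivity.
Qed.

Lemma lcf_scal : forall env c f k, lcf env (fun i => Cmul c (f i)) k = hscal H c (lcf env f k).
Proof.
  intros env c f k; induction k; simpl. rewrite hscal_zero; reflexivity.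
  rewrite IHk, hscal_addv, hscal_mul. reflexivity.
Qed.

Lemma lcf_atom : forall env n k, lcf env (fun i => if Nat.eqb n i then C1 else C0) k =
   if Nat.ltb n k then nth n env (hzero H) else hzero H.
Proof.
  intros env n k; induction k; simpl. destruct n; reflexivity.
  rewrite IHk. destruct (Nat.eqb n k) eqn:E.
  - apply Nat.eqb_eq in E; subst. rewrite Nat.ltb_irrefl.
    replace (Nat.ltb k (S k)) with true by (symmetry; apply Nat.ltb_lt; lia).
    rewrite hscal_1, hadd_0l. reflexivity.
  - rewrite hscal_C0, hadd_0. apply Nat.eqb_neq in E.
    destruct (Nat.ltb n k) eqn:E2.
    + apply Nat.ltb_lt in E2. replace (Nat.ltb n (S k)) with true by (symmetry; apply Nat.ltb_lt; lia). reflexivity.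
    + apply Nat.ltb_ge in E2. replace (Nat.ltb n (S k)) with false by (symmetry; apply Nat.ltb_ge; lia). reflexivity.
Qed.

Lemma veval_lcf : forall env e, veval env e = lcf env (vcoef e) (length env).
Proof.
  intros env e; induction e; simpl.
  - rewrite lcf_atom. destruct (Nat.ltb n (length env)) eqn:E; auto.
    apply Nat.ltb_ge in E. rewrite nth_overflow; auto.
  - symmetry. transitivity (lcf env (fun i => Cmul C0 C0) (length env)).
    apply lcf_ext; intros; Csolve. rewrite lcf_scal, hscal_C0. reflexivity.
  - rewrite lcf_add, IHe1, IHe2. reflexivity.
  - rewrite lcf_scal, IHe, hopp_scal. reflexivity.
  - rewrite lcf_scal, IHe. reflexivity.
Qed.

Fixpoint allc (e1 e2 : vexp) (k : nat) : Prop :=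
  match k with O => True | S k' => vcoef e1 k' = vcoef e2 k' /\ allc e1 e2 k' end.

Lemma allc_spec : forall e1 e2 k, allc e1 e2 k -> forall i, (i < k)%nat -> vcoef e1 i = vcoef e2 i.
Proof.
  intros e1 e2 k; induction k; simpl; intros A i Hi. lia.
  destruct A as [A1 A2]. destruct (Nat.eq_dec i k). subst; auto. apply IHk; auto; lia.
Qed.

Lemma veq : forall env e1 e2, allc e1 e2 (length env) -> veval env e1 = veval env e2.
Proof.
  intros. rewrite !veval_lcf. apply lcf_ext. apply allc_spec; auto.
Qed.

End Basic.

Ltac vmem x l := match l with
 | nil => constr:(false) | cons x _ => constr:(true) | cons _ ?r => vmem x r end.

Ltac vcollect t l :=
  match t with
  | hadd _ ?a ?b => let l1 := vcollect a l in vcollect b l1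
  | @add2 _ ?a ?b => let l1 := vcollect a l in vcollect b l1
  | @hsub _ ?a ?b => let l1 := vcollect a l in vcollect b l1
  | @sub2 _ ?a ?b => let l1 := vcollect a l in vcollect b l1
  | hopp _ ?a => vcollect a l
  | hscal _ _ ?a => vcollect a l
  | @scal2 _ _ ?a => vcollect a l
  | hzero _ => l
  | @zero2 _ => l
  | _ => let b := vmem t l in match b with true => l | false => let l' := eval simpl in (app l (cons t nil)) in l' end
  end.

Ltac vindex x l n := match l with
 | cons x _ => constr:(n) | cons _ ?r => vindex x r (S n) end.

Ltac vreify t l :=
  match t with
  | hadd _ ?a ?b => let x := vreify a l in let y := vreify b l in constr:(VAdd x y)
  | @add2 _ ?a ?b => let x := vreify a l in let y := vreify b l in constr:(VAdd x y)
  | @hsub _ ?a ?b => let x := vreify a l in let y := vreify b l in constr:(VAdd x (VOpp y))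
  | @sub2 _ ?a ?b => let x := vreify a l in let y := vreify b l in constr:(VAdd x (VOpp y))
  | hopp _ ?a => let x := vreify a l in constr:(VOpp x)
  | hscal _ ?c ?a => let x := vreify a l in constr:(VScal c x)
  | @scal2 _ ?c ?a => let x := vreify a l in constr:(VScal c x)
  | hzero _ => constr:(V0)
  | @zero2 _ => constr:(V0)
  | _ => let l' := eval simpl in l in let n := vindex t l' 0%nat in constr:(VA n)
  end.

Ltac vring_with H :=
  match goal with |- ?a = ?b =>
    let l0 := vcollect a (@nil (hcar H)) in
    let l := vcollect b l0 in
    let l := eval simpl in l in
    let e1 := vreify a l in let e2 := vreify b l in
    change (veval H l e1 = veval H l e2); apply veq; simpl;
    repeat split; Csolve
  end.


Section Hil.
Variable H : Hilbert.

Lemma inner_0l : forall y : H, hinner H (hzero H) y = C0.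
Proof. intros. rewrite <- (hscal_C0 H y), hinner_scal. Csolve. Qed.

Lemma inner_0r : forall y : H, hinner H y (hzero H) = C0.
Proof. intros. rewrite hinner_conj, inner_0l. Csolve. Qed.

Lemma inner_addr : forall x y z : H, hinner H x (hadd H y z) = Cadd (hinner H x y) (hinner H x z).
Proof.
  intros. rewrite (hinner_conj H (hadd H y z) x), hinner_add.
  rewrite (hinner_conj H y x), (hinner_conj H z x). Csolve.
Qed.

Lemma inner_scalr : forall a (x y : H), hinner H x (hscal H a y) = Cmul (Cconj a) (hinner H x y).
Proof.
  intros. rewrite (hinner_conj H (hscal H a y) x), hinner_scal.
  rewrite (hinner_conj H y x). Csolve.
Qed.

Lemma inner_oppl : forall x y : H, hinner H (hopp H x) y = Cmul Cm1 (hinner H x y).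
Proof. intros. rewrite hopp_scal, hinner_scal. reflexivity. Qed.
Lemma inner_oppr : forall x y : H, hinner H x (hopp H y) = Cmul Cm1 (hinner H x y).
Proof. intros. rewrite hopp_scal, inner_scalr. Csolve. Qed.
Lemma inner_subl : forall a b y : H, hinner H (hsub H a b) y = Cadd (hinner H a y) (Cmul Cm1 (hinner H b y)).
Proof. intros. unfold hsub. rewrite hinner_add, inner_oppl. reflexivity. Qed.
Lemma inner_subr : forall a b y : H, hinner H y (hsub H a b) = Cadd (hinner H y a) (Cmul Cm1 (hinner H y b)).
Proof. intros. unfold hsub. rewrite inner_addr, inner_oppr. reflexivity. Qed.

Definition nsq (u : H) : R := Re (hinner H u u).

Lemma nsq_pos : forall u, 0 <= nsq u.
Proof. intros; apply hinner_pos. Qed.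

Lemma nsq0 : forall u, nsq u = 0 -> u = hzero H.
Proof. intros u E. apply hinner_def. apply Ceq. exact E. rewrite hinner_im. reflexivity. Qed.

Lemma inner_def0 : forall u, hinner H u u = C0 -> u = hzero H.
Proof. intros; apply hinner_def; auto. Qed.

Lemma Re_conj_inner : forall u v : H, Re (hinner H v u) = Re (hinner H u v).
Proof. intros. rewrite hinner_conj. reflexivity. Qed.

Lemma nsq_add : forall u v, nsq (hadd H u v) = nsq u + nsq v + 2 * Re (hinner H u v).
Proof.
  intros. unfold nsq. rewrite hinner_add, !inner_addr. simpl.
  rewrite (Re_conj_inner u v). ring.
Qed.

Lemma nsq_scal : forall a u, nsq (hscal H a u) = (Re a * Re a + Im a * Im a) * nsq u.
Proof.
  intros. unfold nsq. rewrite hinner_scal, inner_scalr. simpl. rewrite hinner_im. ring.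
Qed.

Lemma CS : forall u v, Re (hinner H u v) * Re (hinner H u v) <= nsq u * nsq v.
Proof.
  intros u v. destruct (Req_dec (nsq v) 0) as [E|E].
  - pose proof E as E0. apply nsq0 in E. subst. rewrite inner_0r. simpl. rewrite E0. ring_simplify.
    pose proof (nsq_pos u). nra.
  - pose proof (nsq_pos v). pose proof (nsq_pos u).
    set (r := Re (hinner H u v)). set (t := r / nsq v).
    pose proof (nsq_pos (hadd H u (hscal H (mkC (- t) 0) v))) as P.
    rewrite nsq_add, nsq_scal, inner_scalr in P. simpl in P.
    fold r in P. unfold t in P.
    assert (0 < nsq v) by lra.
    assert (0 <= nsq u - r * r / nsq v).
    { replace (nsq u - r * r / nsq v) with
       (nsq u + (- (r / nsq v) * - (r / nsq v) + 0 * 0) * nsq v +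
        2 * (- (r / nsq v) * r - - 0 * Im (hinner H u v))) by (field; lra). exact P. }
    assert (Q : 0 <= (nsq u - r * r / nsq v) * nsq v) by nra.
    replace ((nsq u - r * r / nsq v) * nsq v) with (nsq u * nsq v - r * r) in Q by (field; lra).
    lra.
Qed.

Lemma Im_Re : forall u v : H, Im (hinner H u v) = Re (hinner H (hscal H (mkC 0 (-1)) u) v).
Proof. intros. rewrite hinner_scal. simpl. ring. Qed.

Lemma nsq_i : forall u, nsq (hscal H (mkC 0 (-1)) u) = nsq u.
Proof. intros. rewrite nsq_scal. simpl. ring. Qed.

Definition hconv (u : nat -> H) (l : H) : Prop :=
  forall eps, 0 < eps -> exists N, forall n, (N <= n)%nat -> hnorm H (hsub H (u n) l) < eps.
Definition hsubsp (M : H -> Prop) : Prop :=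
  M (hzero H) /\ (forall u v, M u -> M v -> M (hadd H u v)) /\ (forall c u, M u -> M (hscal H c u)).
Definition hclosed (M : H -> Prop) : Prop :=
  forall u l, (forall n, M (u n)) -> hconv u l -> M l.

Lemma conv_nsq : forall u l, hconv u l -> forall d, 0 < d -> exists N, forall n, (N <= n)%nat -> nsq (hsub H (u n) l) < d.
Proof.
  intros u l Hc d Hd. destruct (Hc (sqrt d) (sqrt_lt_R0 d Hd)) as [N HN].
  exists N. intros n Hn. specialize (HN n Hn). unfold hnorm in HN.
  apply sqrt_lt_0_alt. exact HN.
Qed.

Lemma nsq_sub_sym : forall a b, nsq (hsub H a b) = nsq (hsub H b a).
Proof.
  intros. replace (hsub H a b) with (hscal H Cm1 (hsub H b a)) by vring_with H.
  rewrite nsq_scal. simpl. ring.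
Qed.

Lemma small_zero : forall r N, 0 <= N -> (forall d, 0 < d -> r * r <= d * N) -> r = 0.
Proof.
  intros r N HN Hd. destruct (Req_dec r 0); auto.
  assert (0 < r * r) by nra.
  specialize (Hd (r * r / (2 * (N + 1)))).
  assert (0 < r * r / (2 * (N + 1))) by (apply Rdiv_lt_0_compat; lra).
  specialize (Hd H2).
  assert (r * r / (2 * (N + 1)) * N < r * r).
  { apply (Rmult_lt_reg_r (2 * (N + 1))). lra.
    replace (r * r / (2 * (N + 1)) * N * (2 * (N + 1))) with (r * r * N) by (field; lra). nra. }
  lra.
Qed.

Lemma lim_inner_zero : forall u l m, (forall n, hinner H (u n) m = C0) -> hconv u l -> hinner H l m = C0.
Proof.
  intros u l m Hz Hc.
  assert (Hb : forall d, 0 < d -> exists n, nsq (hsub H l (u n)) < d).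
  { intros d Hd. destruct (conv_nsq u l Hc d Hd) as [N HN]. exists N.
    rewrite nsq_sub_sym. apply HN. lia. }
  assert (Hi : forall n, hinner H (hsub H l (u n)) m = hinner H l m).
  { intros n. rewrite inner_subl, Hz. Csolve. }
  apply Ceq.
  - apply (small_zero _ (nsq m) (nsq_pos m)). intros d Hd. destruct (Hb d Hd) as [n Hn].
    pose proof (CS (hsub H l (u n)) m). rewrite Hi in H0.
    pose proof (nsq_pos m). simpl. nra.
  - apply (small_zero _ (nsq m) (nsq_pos m)). intros d Hd. destruct (Hb d Hd) as [n Hn].
    pose proof (CS (hscal H (mkC 0 (-1)) (hsub H l (u n))) m). rewrite nsq_i, <- Im_Re, Hi in H0.
    pose proof (nsq_pos m). simpl. nra.
Qed.

Lemma variational : forall e m, (forall t, nsq e <= nsq (hadd H e (hscal H t m))) -> hinner H e m = C0.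
Proof.
  intros e m Ht. pose proof (nsq_pos m) as HN.
  assert (K : forall tr ti, 0 <= (tr * tr + ti * ti) * nsq m +
      2 * (tr * Re (hinner H e m) + ti * Im (hinner H e m))).
  { intros tr ti. specialize (Ht (mkC tr ti)). rewrite nsq_add, nsq_scal, inner_scalr in Ht.
    simpl in Ht. lra. }
  set (N := nsq m) in *. set (ar := Re (hinner H e m)) in *. set (ai := Im (hinner H e m)) in *.
  assert (ar = 0).
  { specialize (K (- ar / (N + 1)) 0).
    assert (0 <= (N + 1) * (N + 1) * ((- ar / (N + 1) * (- ar / (N + 1)) + 0 * 0) * N +
       2 * (- ar / (N + 1) * ar + 0 * ai))) by (apply Rmult_le_pos; nra).
    replace ((N + 1) * (N + 1) * ((- ar / (N + 1) * (- ar / (N + 1)) + 0 * 0) * N +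
       2 * (- ar / (N + 1) * ar + 0 * ai))) with (- ar * ar * (N + 2)) in H0 by (field; lra).
    nra. }
  assert (ai = 0).
  { specialize (K 0 (- ai / (N + 1))).
    assert (0 <= (N + 1) * (N + 1) * ((0 * 0 + - ai / (N + 1) * (- ai / (N + 1))) * N +
       2 * (0 * ar + - ai / (N + 1) * ai))) by (apply Rmult_le_pos; nra).
    replace ((N + 1) * (N + 1) * ((0 * 0 + - ai / (N + 1) * (- ai / (N + 1))) * N +
       2 * (0 * ar + - ai / (N + 1) * ai))) with (- ai * ai * (N + 2)) in H1 by (field; lra).
    nra. }
  apply Ceq; simpl; auto.
Qed.

End Hil.

Section Proj.
Variable H : Hilbert.
Variable M : H -> Prop.
Hypothesis HM : hsubsp H M.
Hypothesis HC : hclosed H M.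
Variable y : H.

Lemma sqrt_lt_sq : forall x e, 0 <= x -> 0 < e -> x < e * e -> sqrt x < e.
Proof.
  intros. rewrite <- (sqrt_square e) by lra. apply sqrt_lt_1_alt. lra.
Qed.

Lemma Mcomb : forall u v a, M u -> M v -> M (hadd H u (hscal H a v)).
Proof. destruct HM as [H0 [H1 H2]]. auto. Qed.

Theorem proj_exists : exists z, M z /\ forall m, M m -> hinner H (hsub H y z) m = C0.
Proof.
  destruct HM as [HM0 [HMa HMs]].
  set (E := fun r => exists m, M m /\ r = - nsq H (hsub H y m)).
  assert (Hb : bound E).
  { exists 0. intros r [m [_ ->]]. pose proof (nsq_pos H (hsub H y m)). lra. }
  assert (He : exists r, E r) by (exists (- nsq H (hsub H y (hzero H))); exists (hzero H); auto).
  destruct (completeness E Hb He) as [L [Lub1 Lub2]].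
  set (d := - L).
  assert (low : forall m, M m -> d <= nsq H (hsub H y m)).
  { intros m Hm. assert (E (- nsq H (hsub H y m))) by (exists m; auto).
    specialize (Lub1 _ H0). unfold d. lra. }
  assert (d0 : 0 <= d).
  { assert (L <= 0). apply Lub2. intros r [m [_ ->]]. pose proof (nsq_pos H (hsub H y m)). lra.
    unfold d; lra. }
  assert (approx : forall eps, 0 < eps -> exists m, M m /\ nsq H (hsub H y m) < d + eps).
  { intros eps Heps. apply NNPP. intros Hn.
    assert (L <= L - eps).
    { apply Lub2. intros r [m [Hm ->]].
      destruct (Rlt_le_dec (nsq H (hsub H y m)) (d + eps)) as [R1|R1].
      exfalso; apply Hn; exists m; auto. unfold d in R1; lra. }
    lra. }
  assert (Hs : forall n : nat, {m | M m /\ nsq H (hsub H y m) < d + / (INR n + 1)}).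
  { intros n. apply constructive_indefinite_description. apply approx.
    apply Rinv_0_lt_compat. pose proof (pos_INR n). lra. }
  set (ms := fun n => proj1_sig (Hs n)).
  assert (HmsM : forall n, M (ms n)) by (intro n; exact (proj1 (proj2_sig (Hs n)))).
  assert (Hmsd : forall n, nsq H (hsub H y (ms n)) < d + / (INR n + 1))
    by (intro n; exact (proj2 (proj2_sig (Hs n)))).
  assert (par : forall n k, nsq H (hsub H (ms n) (ms k)) <= 2 * / (INR n + 1) + 2 * / (INR k + 1)).
  { intros n k.
    set (a := hsub H y (ms n)). set (b := hsub H y (ms k)).
    set (mid := hscal H (mkC (1/2) 0) (hadd H (ms n) (ms k))).
    assert (Mmid : M mid) by (apply HMs; apply HMa; auto).
    assert (I1 : hsub H (ms n) (ms k) = hadd H b (hscal H Cm1 a)) by (unfold a, b; vring_with H).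
    assert (I2 : hadd H a b = hscal H (mkC 2 0) (hsub H y mid)) by (unfold a, b, mid; vring_with H).
    pose proof (nsq_add H b (hscal H Cm1 a)) as N1. rewrite nsq_scal, inner_scalr in N1.
    pose proof (nsq_add H a b) as N2. rewrite I2, nsq_scal in N2.
    rewrite <- I1 in N1. simpl in N1, N2.
    rewrite (Re_conj_inner H a b) in N1.
    pose proof (low mid Mmid). pose proof (Hmsd n). pose proof (Hmsd k).
    fold a in H1. fold b in H2. lra. }
  assert (cauchy : forall eps, 0 < eps -> exists N, forall m n, (N <= m)%nat -> (N <= n)%nat ->
        sqrt (Re (hinner H (hadd H (ms m) (hopp H (ms n))) (hadd H (ms m) (hopp H (ms n))))) < eps).
  { intros eps Heps. destruct (INR_unbounded (4 / (eps * eps))) as [N HN].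
    exists N. intros m n Hm Hn. apply sqrt_lt_sq. apply nsq_pos. auto.
    pose proof (par m n) as P. change (Re (hinner H (hadd H (ms m) (hopp H (ms n))) (hadd H (ms m) (hopp H (ms n)))))
      with (nsq H (hsub H (ms m) (ms n))).
    assert (INR N <= INR m) by (apply le_INR; auto).
    assert (INR N <= INR n) by (apply le_INR; auto).
    pose proof (pos_INR N).
    assert (/ (INR m + 1) <= / (INR N + 1)) by (apply Rinv_le_contravar; lra).
    assert (/ (INR n + 1) <= / (INR N + 1)) by (apply Rinv_le_contravar; lra).
    assert (4 * / (INR N + 1) < eps * eps).
    { assert (0 < eps * eps) by nra.
      assert (4 / (eps * eps) < INR N + 1) by lra.
      apply (Rmult_lt_reg_r (INR N + 1)). lra.
      rewrite Rmult_assoc, Rinv_l by lra.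
      apply (Rmult_lt_reg_l (/ (eps * eps))). apply Rinv_0_lt_compat; lra.
      replace (/ (eps * eps) * (4 * 1)) with (4 / (eps * eps)) by (field; lra).
      replace (/ (eps * eps) * (eps * eps * (INR N + 1))) with (INR N + 1) by (field; lra). lra. }
    lra. }
  destruct (hcomplete H ms cauchy) as [l Hl].
  assert (Hconv : hconv H ms l) by exact Hl.
  assert (Ml : M l) by (apply (HC ms l HmsM Hconv)).
  assert (nl : nsq H (hsub H y l) <= d).
  { apply Rnot_lt_le. intros Hlt. set (g := nsq H (hsub H y l) - d).
    assert (g0 : 0 < g) by (unfold g; lra).
    set (eta := Rmin (g / 4) (g * g / (64 * (d + g)))).
    assert (eta0 : 0 < eta).
    { unfold eta. apply Rmin_glb_lt. lra. apply Rdiv_lt_0_compat; nra. }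
    destruct (conv_nsq H ms l Hconv eta eta0) as [N1 HN1].
    destruct (INR_unbounded (2 / g)) as [N2 HN2].
    set (n := Nat.max N1 N2).
    specialize (HN1 n (Nat.le_max_l _ _)).
    assert (INR N2 <= INR n) by (apply le_INR; apply Nat.le_max_r).
    assert (/ (INR n + 1) < g / 2).
    { pose proof (pos_INR n).
      apply (Rmult_lt_reg_r (INR n + 1)). lra. rewrite Rinv_l by lra.
      assert (2 / g < INR n + 1) by lra.
      apply (Rmult_lt_reg_l (2 / g)). apply Rdiv_lt_0_compat; lra.
      replace (2 / g * (g / 2 * (INR n + 1))) with (INR n + 1) by (field; lra).
      replace (2 / g * 1) with (2 / g) by ring. lra. }
    set (a := hsub H y (ms n)). set (b := hsub H (ms n) l).
    assert (I : hadd H a b = hsub H y l) by (unfold a, b; vring_with H).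
    pose proof (nsq_add H a b) as N. rewrite I in N.
    pose proof (CS H a b) as C.
    pose proof (Hmsd n) as Ha. fold a in Ha. fold b in HN1.
    pose proof (nsq_pos H a). pose proof (nsq_pos H b).
    set (A := nsq H a) in *. set (B := nsq H b) in *. set (R0 := Re (hinner H a b)) in *.
    assert (eta <= g / 4) by apply Rmin_l.
    assert (eta <= g * g / (64 * (d + g))) by apply Rmin_r.
    assert (HR : g / 4 < 2 * R0) by (unfold g in *; lra).
    assert (4 * A * B <= g * g / 16).
    { assert (A <= d + g) by lra.
      assert (A * B <= (d + g) * eta) by nra.
      assert (Q7 : (d + g) * eta <= (d + g) * (g * g / (64 * (d + g)))) by (apply Rmult_le_compat_l; lra).
      replace ((d + g) * (g * g / (64 * (d + g)))) with (g * g / 64) in Q7 by (field; lra). lra. }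
    nra. }
  exists l. split; auto.
  intros m Hm. apply variational.
  intros t. replace (hadd H (hsub H y l) (hscal H t m)) with (hsub H y (hadd H l (hscal H (Copp t) m)))
    by vring_with H.
  pose proof (low _ (Mcomb l m (Copp t) Ml Hm)). lra.
Qed.

End Proj.

Section X2H.
Variable X : Hilbert.

Definition opp2 (u : X2 X) : X2 X := (hopp X (fst u), hopp X (snd u)).

Lemma x2_add_assoc : forall x y z : X2 X, add2 x (add2 y z) = add2 (add2 x y) z.
Proof. intros [] [] []; unfold add2; simpl; f_equal; apply hadd_assoc. Qed.
Lemma x2_add_comm : forall x y : X2 X, add2 x y = add2 y x.
Proof. intros [] []; unfold add2; simpl; f_equal; apply hadd_comm. Qed.
Lemma x2_add_0 : forall x : X2 X, add2 x (zero2 X) = x.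
Proof. intros []; unfold add2, zero2; simpl; f_equal; apply hadd_0. Qed.
Lemma x2_add_opp : forall x : X2 X, add2 x (opp2 x) = zero2 X.
Proof. intros []; unfold add2, opp2, zero2; simpl; f_equal; apply hadd_opp. Qed.
Lemma x2_scal_1 : forall x : X2 X, scal2 C1 x = x.
Proof. intros []; unfold scal2; simpl; f_equal; apply hscal_1. Qed.
Lemma x2_scal_mul : forall a b (x : X2 X), scal2 (Cmul a b) x = scal2 a (scal2 b x).
Proof. intros a b []; unfold scal2; simpl; f_equal; apply hscal_mul. Qed.
Lemma x2_scal_addv : forall a (x y : X2 X), scal2 a (add2 x y) = add2 (scal2 a x) (scal2 a y).
Proof. intros a [] []; unfold scal2, add2; simpl; f_equal; apply hscal_addv. Qed.
Lemma x2_scal_adds : forall a b (x : X2 X), scal2 (Cadd a b) x = add2 (scal2 a x) (scal2 b x).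
Proof. intros a b []; unfold scal2, add2; simpl; f_equal; apply hscal_adds. Qed.
Lemma x2_inner_add : forall x y z : X2 X, inner2 (add2 x y) z = Cadd (inner2 x z) (inner2 y z).
Proof. intros [] [] []; unfold inner2, add2; simpl. rewrite !hinner_add. Csolve. Qed.
Lemma x2_inner_scal : forall a (x y : X2 X), inner2 (scal2 a x) y = Cmul a (inner2 x y).
Proof. intros a [] []; unfold inner2, scal2; simpl. rewrite !hinner_scal. Csolve. Qed.
Lemma x2_inner_conj : forall x y : X2 X, inner2 y x = Cconj (inner2 x y).
Proof. intros [] []; unfold inner2; simpl. rewrite (hinner_conj X h), (hinner_conj X h0). Csolve. Qed.
Lemma x2_inner_im : forall x : X2 X, Im (inner2 x x) = 0.
Proof. intros []; unfold inner2; simpl. rewrite !hinner_im. ring. Qed.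
Lemma x2_inner_pos : forall x : X2 X, 0 <= Re (inner2 x x).
Proof. intros []; unfold inner2; simpl. pose proof (hinner_pos X h). pose proof (hinner_pos X h0). lra. Qed.
Lemma x2_inner_def : forall x : X2 X, inner2 x x = C0 -> x = zero2 X.
Proof.
  intros [a b] E. unfold inner2 in E; simpl in E.
  pose proof (hinner_pos X a). pose proof (hinner_pos X b).
  assert (Ea : Re (hinner X a a) = 0). { apply (f_equal Re) in E. simpl in E. lra. }
  assert (Eb : Re (hinner X b b) = 0). { apply (f_equal Re) in E. simpl in E. lra. }
  unfold zero2. f_equal; apply nsq0; auto.
Qed.

Lemma sqrt_lt_sq2 : forall a e, 0 <= a -> sqrt a < e -> a < e * e.
Proof.
  intros a e Ha Hs. pose proof (sqrt_sqrt a Ha). pose proof (sqrt_pos a). nra.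
Qed.

Lemma x2_complete : forall u : nat -> X2 X,
    (forall eps, 0 < eps -> exists N, forall m n, (N <= m)%nat -> (N <= n)%nat ->
        sqrt (Re (inner2 (add2 (u m) (opp2 (u n))) (add2 (u m) (opp2 (u n))))) < eps) ->
    exists l, forall eps, 0 < eps -> exists N, forall n, (N <= n)%nat ->
        sqrt (Re (inner2 (add2 (u n) (opp2 l)) (add2 (u n) (opp2 l)))) < eps.
Proof.
  intros u Hc.
  assert (C1' : forall eps, 0 < eps -> exists N, forall m n, (N <= m)%nat -> (N <= n)%nat ->
        sqrt (Re (hinner X (hadd X (fst (u m)) (hopp X (fst (u n)))) (hadd X (fst (u m)) (hopp X (fst (u n)))))) < eps).
  { intros eps He. destruct (Hc eps He) as [N HN]. exists N. intros m n Hm Hn.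
    eapply Rle_lt_trans; [|apply (HN m n Hm Hn)]. apply sqrt_le_1_alt.
    unfold inner2, add2, opp2; simpl. pose proof (hinner_pos X (hadd X (snd (u m)) (hopp X (snd (u n))))). lra. }
  assert (C2' : forall eps, 0 < eps -> exists N, forall m n, (N <= m)%nat -> (N <= n)%nat ->
        sqrt (Re (hinner X (hadd X (snd (u m)) (hopp X (snd (u n)))) (hadd X (snd (u m)) (hopp X (snd (u n)))))) < eps).
  { intros eps He. destruct (Hc eps He) as [N HN]. exists N. intros m n Hm Hn.
    eapply Rle_lt_trans; [|apply (HN m n Hm Hn)]. apply sqrt_le_1_alt.
    unfold inner2, add2, opp2; simpl. pose proof (hinner_pos X (hadd X (fst (u m)) (hopp X (fst (u n))))). lra. }
  destruct (hcomplete X (fun n => fst (u n)) C1') as [l1 L1].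
  destruct (hcomplete X (fun n => snd (u n)) C2') as [l2 L2].
  exists (l1, l2). intros eps He.
  destruct (L1 (eps / 2) ltac:(lra)) as [N1 HN1].
  destruct (L2 (eps / 2) ltac:(lra)) as [N2 HN2].
  exists (Nat.max N1 N2). intros n Hn.
  specialize (HN1 n ltac:(lia)). specialize (HN2 n ltac:(lia)). simpl in HN1, HN2.
  apply sqrt_lt_sq. apply x2_inner_pos. lra.
  apply sqrt_lt_sq2 in HN1; [|apply hinner_pos]. apply sqrt_lt_sq2 in HN2; [|apply hinner_pos].
  unfold inner2, add2, opp2; simpl. nra.
Qed.

Definition X2h : Hilbert :=
  {| hcar := X2 X; hzero := zero2 X; hadd := @add2 X; hopp := opp2; hscal := @scal2 X; hinner := @inner2 X;
     hadd_assoc := x2_add_assoc; hadd_comm := x2_add_comm; hadd_0 := x2_add_0; hadd_opp := x2_add_opp;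
     hscal_1 := x2_scal_1; hscal_mul := x2_scal_mul; hscal_addv := x2_scal_addv; hscal_adds := x2_scal_adds;
     hinner_add := x2_inner_add; hinner_scal := x2_inner_scal; hinner_conj := x2_inner_conj;
     hinner_im := x2_inner_im; hinner_pos := x2_inner_pos; hinner_def := x2_inner_def; hcomplete := x2_complete |}.

End X2H.


Fixpoint lcH (Y : Hilbert) (cs : list C) (vs : list Y) : Y :=
  match cs, vs with
  | c :: cs', v :: vs' => hadd Y (hscal Y c v) (lcH Y cs' vs')
  | _, _ => hzero Y
  end.

Lemma lincomb_lcH : forall (X : Hilbert) cs vs, lincomb X cs vs = lcH X cs vs.
Proof. intros X cs; induction cs; intros [|v vs]; simpl; auto. rewrite IHcs; auto. Qed.

Lemma lincomb2_lcH : forall (X : Hilbert) cs vs, lincomb2 cs vs = lcH (X2h X) cs vs.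
Proof. intros X cs; induction cs; intros [|v vs]; simpl; auto. rewrite IHcs; auto. Qed.

Lemma inner_lcH0 : forall (Y : Hilbert) (u : Y) cs vs, (forall v, In v vs -> hinner Y u v = C0) ->
  hinner Y u (lcH Y cs vs) = C0.
Proof.
  intros Y u cs; induction cs; intros [|v vs] Hv; simpl; try apply inner_0r.
  rewrite inner_addr, inner_scalr, Hv by (left; auto). rewrite IHcs by (intros; apply Hv; right; auto).
  Csolve.
Qed.

Definition Cinv (b : C) : C :=
  mkC (Re b / (Re b * Re b + Im b * Im b)) (- Im b / (Re b * Re b + Im b * Im b)).

Lemma div_cancel : forall x b, b <> C0 -> Cadd x (Cmul (Copp (Cmul x (Cinv b))) b) = C0.
Proof.
  intros x [br bi] Hb. assert (br * br + bi * bi <> 0).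
  { intro E. apply Hb. assert (br = 0) by nra. assert (bi = 0) by nra. subst. reflexivity. }
  apply Ceq; unfold Cadd, Cmul, Copp, Cinv, C0; simpl; field; auto.
Qed.

Lemma LA : forall (Y : Hilbert) (V : Type) (comb : V -> C -> V -> V) (g : V -> Y) (cs : list (V -> C))
  (P : V -> Prop),
  (forall v v0 a, P v -> P v0 -> P (comb v a v0)) ->
  (forall v v0 a, P v -> P v0 -> g v = hadd Y (hscal Y a (g v0)) (g (comb v a v0))) ->
  (forall c, In c cs -> forall v v0 a, P v -> P v0 -> c (comb v a v0) = Cadd (c v) (Cmul (Copp a) (c v0))) ->
  (forall v, P v -> (forall c, In c cs -> c v = C0) -> g v = hzero Y) ->
  exists L, forall v, P v -> exists a, g v = lcH Y a L.
Proof.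
  intros Y V comb g cs. induction cs as [|c cs IH]; intros P Pc Gl Cl Key.
  - exists nil. intros v Pv. exists nil. simpl. apply Key; auto. intros c [].
  - destruct (classic (exists v0, P v0 /\ c v0 <> C0)) as [[v0 [Pv0 Cv0]]|Hno].
    + destruct (IH (fun v => P v /\ c v = C0)) as [L HL].
      * intros v v1 a [Pv Cv] [Pv1 Cv1]. split; auto. rewrite (Cl c (or_introl eq_refl)) by auto.
        rewrite Cv, Cv1. Csolve.
      * intros v v1 a [Pv _] [Pv1 _]. auto.
      * intros c' Hc'. intros v v1 a [Pv _] [Pv1 _]. apply Cl; auto. right; auto.
      * intros v [Pv Cv] Hall. apply Key; auto. intros c' [<-|Hc']; auto.
      * exists (g v0 :: L). intros v Pv.
        set (a := Cmul (c v) (Cinv (c v0))).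
        destruct (HL (comb v a v0)) as [b Hb].
        { split; auto. rewrite (Cl c (or_introl eq_refl)) by auto. apply div_cancel; auto. }
        exists (a :: b). simpl. rewrite <- Hb. apply Gl; auto.
    + destruct (IH P) as [L HL]; auto.
      * intros c' Hc'; apply Cl; right; auto.
      * intros v Pv Hall. apply Key; auto. intros c' [<-|Hc']; auto.
        apply NNPP; intro Hn; apply Hno; exists v; auto.
      * exists L; auto.
Qed.

Section X2lem.
Variable X : Hilbert.
Lemma i2_add_l : forall a b y : X2 X, inner2 (add2 a b) y = Cadd (inner2 a y) (inner2 b y).
Proof. exact (hinner_add (X2h X)). Qed.
Lemma i2_scal_l : forall c (a y : X2 X), inner2 (scal2 c a) y = Cmul c (inner2 a y).
Proof. exact (hinner_scal (X2h X)). Qed.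
Lemma i2_add_r : forall a b y : X2 X, inner2 y (add2 a b) = Cadd (inner2 y a) (inner2 y b).
Proof. intros; exact (inner_addr (X2h X) y a b). Qed.
Lemma i2_sub_l : forall a b y : X2 X, inner2 (sub2 a b) y = Cadd (inner2 a y) (Cmul Cm1 (inner2 b y)).
Proof. exact (inner_subl (X2h X)). Qed.
Lemma i2_sub_r : forall a b y : X2 X, inner2 y (sub2 a b) = Cadd (inner2 y a) (Cmul Cm1 (inner2 y b)).
Proof. intros; exact (inner_subr (X2h X) a b y). Qed.
Lemma i2_0l : forall y : X2 X, inner2 (zero2 X) y = C0.
Proof. exact (inner_0l (X2h X)). Qed.
Lemma pair_eq : forall (a c b d : X), a = c -> b = d -> (a, b) = (c, d).
Proof. intros; subst; auto. Qed.
Lemma sub_zero_eq : forall (Y : Hilbert) (a b : Y), hsub Y a b = hzero Y -> a = b.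
Proof.
  intros Y a b E. transitivity (hadd Y (hsub Y a b) b). vring_with Y. rewrite E. apply hadd_0l.
Qed.

Lemma proj2_comb : forall (U : X2 X -> Prop), subspace2 U ->
  forall w p w0 p0 b, is_proj2 U w p -> is_proj2 U w0 p0 ->
  is_proj2 U (add2 w (scal2 b w0)) (add2 p (scal2 b p0)).
Proof.
  intros U [U0 [Ua Us]] w p w0 p0 b [Up Op] [Up0 Op0]. split. auto.
  intros v Uv. replace (sub2 (add2 w (scal2 b w0)) (add2 p (scal2 b p0))) with
    (add2 (sub2 w p) (scal2 b (sub2 w0 p0))) by vring_with (X2h X).
  rewrite i2_add_l, i2_scal_l, Op, Op0 by auto. Csolve.
Qed.
End X2lem.

Section Main.
Variable X : Hilbert.
Variables T A S : X2 X -> Prop.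
Hypothesis HT : closed_subspace2 T.
Hypothesis HA : closed_subspace2 A.
Hypothesis hA : hermitian A.
Hypothesis HS : subspace2 S.
Hypothesis sS : selfadjoint S.
Hypothesis dSA : forall x, dom S x -> dom A x.
Hypothesis TSA : forall w, T w <-> rel_sum S A w.

Let S0 := image_at S (hzero X).
Let A0 := image_at A (hzero X).
Let QR := QAs_range A S (dom S).

Lemma L_S0 : forall g, S (hzero X, g) <-> (forall x, dom S x -> hinner X g x = C0).
Proof.
  intros g; split.
  - intros Sg x [f Sxf]. apply sS in Sg. specialize (Sg x f Sxf). simpl in Sg. rewrite Sg. apply inner_0l.
  - intros Hg. apply sS. intros x f Sxf. simpl. rewrite inner_0l. apply Hg. exists f; auto.
Qed.

Lemma L_dom_perp : forall x, dom S x -> perp X S0 x.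
Proof.
  intros x Dx m Sm. unfold S0, image_at in Sm. rewrite L_S0 in Sm. specialize (Sm x Dx).
  rewrite hinner_conj, Sm. Csolve.
Qed.

Lemma L_A0S0 : forall g, A (hzero X, g) -> S (hzero X, g).
Proof.
  intros g Ag. apply L_S0. intros x Dx. destruct (dSA x Dx) as [a Axa].
  specialize (hA _ Ag x a Axa). simpl in hA. rewrite hA. apply inner_0l.
Qed.

Lemma L_pp : forall v, (forall m, perp X S0 m -> hinner X v m = C0) -> S (hzero X, v).
Proof. intros v Hv. apply L_S0. intros x Dx. apply Hv. apply L_dom_perp; auto. Qed.

Lemma A0_sub : hsubsp X A0.
Proof.
  destruct HA as [[A00 [Aa As]] _]. unfold A0, image_at. split; [|split].
  - exact A00.
  - intros u v Au Av. pose proof (Aa _ _ Au Av). unfold add2 in H; simpl in H. rewrite hadd_0 in H. exact H.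
  - intros c u Au. pose proof (As c _ Au). unfold scal2 in H; simpl in H. rewrite hscal_zero in H. exact H.
Qed.

Lemma A0_closed : hclosed X A0.
Proof.
  destruct HA as [_ Acl]. intros u l Hu Hc. unfold A0, image_at in *.
  apply (Acl (fun n => (hzero X, u n))); auto.
  intros eps He. destruct (Hc eps He) as [N HN]. exists N. intros n Hn. specialize (HN n Hn).
  unfold norm2, sub2, inner2; simpl. replace (hsub X (hzero X) (hzero X)) with (hzero X) by vring_with X.
  rewrite inner_0l. simpl. rewrite Rplus_0_l. exact HN.
Qed.

Lemma perp_sub : forall M, hsubsp X (perp X M).
Proof.
  intros M. split; [|split]; intros; intros m Hm.
  - apply inner_0l.
  - rewrite hinner_add, H, H0 by auto. Csolve.
  - rewrite hinner_scal, H by auto. Csolve.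
Qed.

Lemma perp_closed : forall M, hclosed X (perp X M).
Proof. intros M u l Hu Hc m Hm. apply (lim_inner_zero X u l m); auto. intros n; apply Hu; auto. Qed.

Lemma adj_iff : forall (w : X2 X) x f, inner2 w (hopp X f, x) = C0 <-> hinner X (snd w) x = hinner X (fst w) f.
Proof.
  intros w x f. unfold inner2; simpl. rewrite inner_oppr. split; intros E.
  - apply Ceq; [apply (f_equal Re) in E|apply (f_equal Im) in E]; simpl in E; lra.
  - rewrite E. Csolve.
Qed.

Lemma S_sub : hsubsp (X2h X) S.
Proof. exact HS. Qed.

Lemma S_closed : hclosed (X2h X) S.
Proof.
  intros u l Hu Hc. apply sS. intros x f Sxf. apply adj_iff.
  apply (lim_inner_zero (X2h X) u l (hopp X f, x)); auto.
  intros n. apply adj_iff. apply sS; auto.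
Qed.

Lemma T_of_S0 : forall g, S (hzero X, g) -> T (hzero X, g).
Proof.
  intros g Sg. apply TSA. exists g, (hzero X). simpl. split; auto. split.
  destruct HA as [[A00 _] _]. exact A00. symmetry; apply hadd_0.
Qed.

Lemma Dec : forall x a, A (x, a) -> dom S x ->
  exists z m, QR z /\ S (hzero X, m) /\ a = hadd X z m.
Proof.
  intros x a Axa Dx.
  destruct (proj_exists X A0 A0_sub A0_closed a) as [a0 [Aa0 Oa0]].
  set (f := hsub X a a0).
  assert (Axf : A (x, f)).
  { destruct HA as [[_ [Aa As]] _].
    assert (E : (x, f) = add2 (x, a) (scal2 Cm1 (hzero X, a0))).
    { unfold add2, scal2, f; simpl. apply pair_eq; vring_with X. }
    rewrite E. apply Aa; auto. }
  destruct (proj_exists X (perp X S0) (perp_sub S0) (perp_closed S0) f) as [z [Pz Oz]].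
  exists z, (hadd X (hsub X f z) a0). split; [|split].
  - exists x, f. split; auto. split; [split|split].
    + auto.
    + intros [v1 v2] [E Av]. simpl in E. subst v1. unfold inner2; simpl.
      rewrite inner_0r. pose proof (Oa0 v2 Av) as O; fold f in O; rewrite O. Csolve.
    + intros m Am. apply Oa0. auto.
    + split; auto.
  - assert (S1 : S (hzero X, hsub X f z)) by (apply L_pp; auto).
    assert (S2 : S (hzero X, a0)) by (apply L_A0S0; auto).
    destruct HS as [_ [Sa _]]. pose proof (Sa _ _ S1 S2) as S3. unfold add2 in S3; simpl in S3.
    rewrite hadd_0 in S3. exact S3.
  - unfold f. vring_with X.
Qed.

Lemma TsubS : forall x t, T (x, t) -> exists s z, S (x, s) /\ QR z /\ t = hadd X s z.
Proof.
  intros x t Txt. apply TSA in Txt. destruct Txt as [f [g [Sf [Ag Et]]]]. simpl in *.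
  destruct (Dec x g Ag (ex_intro _ f Sf)) as [z [m [Qz [Sm Eg]]]].
  exists (hadd X f m), z. split; [|split]; auto.
  - destruct HS as [_ [Sa _]]. pose proof (Sa _ _ Sf Sm) as S3. unfold add2 in S3; simpl in S3.
    rewrite hadd_0 in S3. exact S3.
  - rewrite Et, Eg. vring_with X.
Qed.

Lemma SsubT : forall x s, S (x, s) -> exists t z, T (x, t) /\ QR z /\ s = hadd X t (hopp X z).
Proof.
  intros x s Sxs. destruct (dSA x (ex_intro _ s Sxs)) as [a Axa].
  destruct (Dec x a Axa (ex_intro _ s Sxs)) as [z [m [Qz [Sm Ea]]]].
  assert (T1 : T (x, hadd X s a)) by (apply TSA; exists s, a; auto).
  assert (T2 : T (hzero X, hopp X m)).
  { apply T_of_S0. destruct HS as [_ [_ Ss]]. pose proof (Ss Cm1 _ Sm) as S3.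
    unfold scal2 in S3; simpl in S3. rewrite hscal_zero, <- hopp_scal in S3. exact S3. }
  exists (hadd X (hadd X s a) (hopp X m)), z. split; [|split]; auto.
  - destruct HT as [[_ [Ta _]] _]. pose proof (Ta _ _ T1 T2) as T3. unfold add2 in T3; simpl in T3.
    rewrite hadd_0 in T3. exact T3.
  - rewrite Ea. vring_with X.
Qed.

Lemma QR_inner : forall (zs : list X) (y : X),
  (forall z, QR z -> exists cs, z = lincomb X cs zs) ->
  (forall z, In z zs -> hinner X y z = C0) -> forall z, QR z -> hinner X y z = C0.
Proof.
  intros zs y Hzs Hy z Qz. destruct (Hzs z Qz) as [cs ->]. rewrite lincomb_lcH. apply inner_lcH0; auto.
Qed.

Lemma dir_back : finite_dim X QR -> finite_rank_perturbation T S.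
Proof.
  intros [zs Hzs].
  set (cs := map (fun z => fun v : X2 X * X2 X * X2 X => hinner X (snd (sub2 (fst (fst v)) (snd (fst v)))) z) zs
          ++ map (fun z => fun v : X2 X * X2 X * X2 X => hinner X (snd (sub2 (fst (fst v)) (snd v))) z) zs).
  destruct (LA (X2h X) (X2 X * X2 X * X2 X)
     (fun v a v0 => (add2 (fst (fst v)) (scal2 (Copp a) (fst (fst v0))),
                     add2 (snd (fst v)) (scal2 (Copp a) (snd (fst v0))),
                     add2 (snd v) (scal2 (Copp a) (snd v0))))
     (fun v => sub2 (snd (fst v)) (snd v)) cs
     (fun v => is_proj2 T (fst (fst v)) (snd (fst v)) /\ is_proj2 S (fst (fst v)) (snd v))) as [L HL].
  - intros [[w p] q] [[w0 p0] q0] a [P1 P2] [P3 P4]; simpl in *. split; apply proj2_comb; auto.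
    apply HT.
  - intros [[w p] q] [[w0 p0] q0] a _ _; simpl. vring_with (X2h X).
  - intros c Hc [[w p] q] [[w0 p0] q0] a _ _. unfold cs in Hc. apply in_app_or in Hc.
    destruct Hc as [Hc|Hc]; apply in_map_iff in Hc; destruct Hc as [z [<- _]]; simpl.
    + replace (hsub X (hadd X (snd w) (hscal X (Copp a) (snd w0))) (hadd X (snd p) (hscal X (Copp a) (snd p0))))
        with (hadd X (hsub X (snd w) (snd p)) (hscal X (Copp a) (hsub X (snd w0) (snd p0)))) by vring_with X.
      rewrite hinner_add, hinner_scal. reflexivity.
    + replace (hsub X (hadd X (snd w) (hscal X (Copp a) (snd w0))) (hadd X (snd q) (hscal X (Copp a) (snd q0))))
        with (hadd X (hsub X (snd w) (snd q)) (hscal X (Copp a) (hsub X (snd w0) (snd q0)))) by vring_with X.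
      rewrite hinner_add, hinner_scal. reflexivity.
  - intros [[w p] q] [[Tp OTp] [Sq OSq]] Hall; simpl in *.
    assert (Z1 : forall z, QR z -> hinner X (snd (sub2 w p)) z = C0).
    { apply (QR_inner zs); auto. intros z Hz. apply (Hall (fun v : X2 X * X2 X * X2 X => hinner X (snd (sub2 (fst (fst v)) (snd (fst v)))) z)).
      unfold cs. apply in_or_app. left. apply in_map_iff. exists z; auto. }
    assert (Z2 : forall z, QR z -> hinner X (snd (sub2 w q)) z = C0).
    { apply (QR_inner zs); auto. intros z Hz. apply (Hall (fun v : X2 X * X2 X * X2 X => hinner X (snd (sub2 (fst (fst v)) (snd v))) z)).
      unfold cs. apply in_or_app. right. apply in_map_iff. exists z; auto. }
    assert (Ed : sub2 p q = sub2 (sub2 w q) (sub2 w p)) by vring_with (X2h X).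
    assert (OS : forall s, S s -> inner2 (sub2 p q) s = C0).
    { intros [x s2] Ss. destruct (SsubT x s2 Ss) as [t [z [Txt [Qz Es]]]].
      rewrite Ed, i2_sub_l, OSq by auto.
      assert (E2 : (x, s2) = add2 (x, t) (hzero X, hopp X z)).
      { unfold add2; simpl. apply pair_eq. symmetry; apply hadd_0. exact Es. }
      rewrite E2, i2_add_r, OTp by auto. unfold inner2 at 1; simpl.
      rewrite inner_0r, inner_oppr, Z1 by auto. Csolve. }
    assert (OT : forall t, T t -> inner2 (sub2 p q) t = C0).
    { intros [x t2] Tt. destruct (TsubS x t2 Tt) as [s [z [Sxs [Qz Et]]]].
      rewrite Ed, i2_sub_l, (OTp (x, t2)) by auto.
      assert (E2 : (x, t2) = add2 (x, s) (hzero X, z)).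
      { unfold add2; simpl. apply pair_eq. symmetry; apply hadd_0. exact Et. }
      rewrite E2, i2_add_r, OSq by auto. unfold inner2 at 1; simpl.
      rewrite inner_0r, Z2 by auto. Csolve. }
    apply (inner_def0 (X2h X)). simpl.
    rewrite i2_sub_r, OT, OS by auto. Csolve.
  - exists L. intros d [w [p [q [P1 [P2 ->]]]]].
    destruct (HL ((w, p), q) (conj P1 P2)) as [a Ha]. exists a. rewrite lincomb2_lcH. exact Ha.
Qed.

Lemma dir_fwd : finite_rank_perturbation T S -> finite_dim X QR.
Proof.
  intros [vs Hvs].
  set (V := (X * X * X * X * X2 X)%type).
  set (cs := map (fun vj => fun v : V =>
      inner2 (sub2 (fst (fst (fst (fst v))), hadd X (snd (fst (fst (fst v)))) (snd (fst v))) (snd v)) vj) vs).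
  destruct (LA X V
     (fun v a v0 => (hadd X (fst (fst (fst (fst v)))) (hscal X (Copp a) (fst (fst (fst (fst v0))))),
                     hadd X (snd (fst (fst (fst v)))) (hscal X (Copp a) (snd (fst (fst (fst v0))))),
                     hadd X (snd (fst (fst v))) (hscal X (Copp a) (snd (fst (fst v0)))),
                     hadd X (snd (fst v)) (hscal X (Copp a) (snd (fst v0))),
                     add2 (snd v) (scal2 (Copp a) (snd v0))))
     (fun v => snd (fst v)) cs
     (fun v => let '(x, s, f, z, q) := v in
        S (x, s) /\ rel_s A (x, f) /\ perp X A0 f /\ is_proj X (perp X S0) f z /\
        is_proj2 S (x, hadd X s z) q)) as [L HL].
  - intros [[[[x s] f] z] q] [[[[x0 s0] f0] z0] q0] a [Sxs [[Axf Of] [Pf [[Pz Oz] Pq]]]]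
      [Sxs0 [[Axf0 Of0] [Pf0 [[Pz0 Oz0] Pq0]]]]; simpl.
    set (b := Copp a).
    destruct HS as [S00 [Sa Ss]]. destruct HA as [[A00 [Aa As]] _].
    split; [|split; [|split; [|split]]].
    + exact (Sa _ _ Sxs (Ss b _ Sxs0)).
    + split. exact (Aa _ _ Axf (As b _ Axf0)).
      intros v Hv. change (inner2 (add2 (x, f) (scal2 b (x0, f0))) v = C0).
      rewrite i2_add_l, i2_scal_l, Of, Of0 by auto. Csolve.
    + apply (perp_sub A0); auto. apply (perp_sub A0); auto.
    + split. apply (perp_sub S0); auto. apply (perp_sub S0); auto.
      intros m Hm. replace (hsub X (hadd X f (hscal X b f0)) (hadd X z (hscal X b z0))) with
        (hadd X (hsub X f z) (hscal X b (hsub X f0 z0))) by vring_with X.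
      rewrite hinner_add, hinner_scal, Oz, Oz0 by auto. Csolve.
    + replace (hadd X x (hscal X b x0), hadd X (hadd X s (hscal X b s0)) (hadd X z (hscal X b z0)))
        with (add2 (x, hadd X s z) (scal2 b (x0, hadd X s0 z0))).
      apply proj2_comb; auto.
      unfold add2, scal2; simpl. apply pair_eq; [reflexivity|vring_with X].
  - intros [[[[x s] f] z] q] [[[[x0 s0] f0] z0] q0] a _ _; simpl. vring_with X.
  - intros c Hc [[[[x s] f] z] q] [[[[x0 s0] f0] z0] q0] a _ _. unfold cs in Hc.
    apply in_map_iff in Hc. destruct Hc as [vj [<- _]]. simpl.
    set (b := Copp a).
    replace (hadd X x (hscal X b x0), hadd X (hadd X s (hscal X b s0)) (hadd X z (hscal X b z0)))
      with (add2 (x, hadd X s z) (scal2 b (x0, hadd X s0 z0))).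
    2:{ unfold add2, scal2; simpl. apply pair_eq; [reflexivity|vring_with X]. }
    replace (sub2 (add2 (x, hadd X s z) (scal2 b (x0, hadd X s0 z0))) (add2 q (scal2 b q0))) with
      (add2 (sub2 (x, hadd X s z) q) (scal2 b (sub2 (x0, hadd X s0 z0) q0))) by vring_with (X2h X).
    rewrite i2_add_l, i2_scal_l. reflexivity.
  - intros [[[[x s] f] z] q] [Sxs [[Axf Of] [Pf [[Pz Oz] [Sq Oq]]]]] Hall; simpl.
    set (t := (x, hadd X s z)).
    assert (Tt : T t).
    { assert (T1 : T (x, hadd X s f)) by (apply TSA; exists s, f; auto).
      assert (T2 : T (hzero X, hsub X z f)).
      { apply T_of_S0. apply L_pp. intros m Hm.
        replace (hsub X z f) with (hscal X Cm1 (hsub X f z)) by vring_with X.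
        rewrite hinner_scal, Oz by auto. Csolve. }
      destruct HT as [[_ [Ta _]] _]. pose proof (Ta _ _ T1 T2) as T3.
      replace t with (add2 (x, hadd X s f) (hzero X, hsub X z f)); auto.
      unfold add2, t; simpl. apply pair_eq. apply hadd_0. vring_with X. }
    assert (Rt : exists w p q', is_proj2 T w p /\ is_proj2 S w q' /\ sub2 t q = sub2 p q').
    { exists t, t, q. split; [split|split]; auto.
      intros v Tv. replace (sub2 t t) with (zero2 X) by vring_with (X2h X). apply i2_0l.
      split; auto. }
    destruct (Hvs _ Rt) as [a Ea].
    assert (Ez : sub2 t q = zero2 X).
    { apply (inner_def0 (X2h X)). simpl.
      rewrite Ea at 2. rewrite lincomb2_lcH. apply (inner_lcH0 (X2h X)).
      intros v Hv. apply (Hall (fun v0 : V =>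
        inner2 (sub2 (fst (fst (fst (fst v0))), hadd X (snd (fst (fst (fst v0)))) (snd (fst v0))) (snd v0)) v)).
      unfold cs. apply in_map_iff. exists v; auto. }
    apply (sub_zero_eq (X2h X)) in Ez. rewrite <- Ez in Sq.
    assert (S0z : S (hzero X, z)).
    { destruct HS as [_ [Sa Ss]]. pose proof (Sa _ _ Sq (Ss Cm1 _ Sxs)) as S3.
      replace (hzero X, z) with (add2 t (scal2 Cm1 (x, s))); auto.
      unfold add2, scal2, t; simpl. apply pair_eq; vring_with X. }
    apply inner_def0. apply Pz. exact S0z.
  - exists L. intros z [x [f [Dx [Rf [Pf Pz]]]]].
    destruct Dx as [s Sxs].
    destruct (proj_exists (X2h X) S S_sub S_closed (x, hadd X s z)) as [q [Sq Oq]].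
    destruct (HL ((((x, s), f), z), q)) as [a Ha].
    { simpl. split; auto. split; auto. split; auto. split; auto. split; auto. }
    exists a. rewrite lincomb_lcH. exact Ha.
Qed.

End Main.

Theorem theorem3p7 (X : Hilbert) (T A S : X2 X -> Prop) :
  closed_subspace2 T -> hermitian T ->
  closed_subspace2 A -> hermitian A ->
  subspace2 S -> selfadjoint S ->
  (forall x, dom T x <-> dom S x) ->
  (forall x, dom S x -> dom A x) ->
  (forall w, T w <-> rel_sum S A w) ->
  (exists lam, in_resolvent T lam /\ in_resolvent S lam) ->
  (@finite_dim X (@QAs_range X A S (@dom X S)) <-> finite_rank_perturbation T S).
Proof.
  intros HT hT HA hA HS sS dTS dSA TSA _.
  split; intros Hf.
  - apply (dir_back X T A S); auto.
  - apply (dir_fwd X T A S); auto.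
Qed.
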